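(* Let $n$ be a positive integer and let $\mathcal M_{n^2}$ be the set of integer matrices of determinant $n^2$ whose entries have greatest common divisor $1$. A complete set of representatives of the $\mathrm{SL}(2,\mathbb Z)$-conjugacy classes of hyperbolic elements of $\mathcal M_{n^2}$ whose fixed points are cusps is $$\left\{\pm\begin{pmatrix}a&b+ma\\0&d\end{pmatrix}:\ b=1,\dots,h,\ \gcd(b,h)=1,\ m=1,\dots,(d-a)/h,\ \text{where }h=\gcd(a,d)\right\},$$ where $a$ and $d$ run over all integers satisfying $ad=n^2$ and $0<a<d$.
   Context: An element is hyperbolic if its fixed points in $\mathbb P^1(\mathbb C)$ are two distinct real numbers; ''fixed points are cusps'' means both fixed points lie in $\mathbb P^1(\mathbb Q)$. Two such elements are equivalent if they are conjugate by an element of $\mathrm{SL}(2,\mathbb Z)$. *)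

(* Defs.v *)
From HB Require Import structures.
From mathcomp Require Import all_boot all_order all_algebra all_field.
Set Implicit Arguments. Unset Strict Implicit. Unset Printing Implicit Defensive.
Import Order.TTheory GRing.Theory Num.Theory.
Local Open Scope ring_scope.

Definition mx2 {R : nzRingType} (a b c d : R) : 'M[R]_2 :=
  \matrix_(i < 2, j < 2)
    nth 0 (nth [::] [:: [:: a; b]; [:: c; d]] i) j.

(* The matrix M of Z acting on P^1(C) (C = algC, the algebraic complex
   numbers; fixed points of integer matrices are algebraic). A point of
   P^1 is a nonzero column vector up to nonzero scalars. *)
Definition Cmx (M : 'M[int]_2) : 'M[algC]_2 := map_mx intr M.

Definition fixed_pt (M : 'M[int]_2) (v : 'cV[algC]_2) : Prop :=
  v != 0 /\ exists lam : algC, Cmx M *m v = lam *: v.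

Definition proj_eq (v w : 'cV[algC]_2) : Prop :=
  exists c : algC, c != 0 /\ w = c *: v.

(* the projective point [v] lies in P^1(S) for the subset S of C *)
Definition pt_in (S : pred algC) (v : 'cV[algC]_2) : Prop :=
  exists c : algC, c != 0 /\ forall i, (c *: v) i 0 \in S.

Definition hyperbolic (M : 'M[int]_2) : Prop :=
  exists v w, fixed_pt M v /\ fixed_pt M w /\ ~ proj_eq v w /\
    pt_in [pred x | x \is Num.real] v /\ pt_in [pred x | x \is Num.real] w /\
    (forall u, fixed_pt M u -> proj_eq v u \/ proj_eq w u).

Definition cusp_fixed (M : 'M[int]_2) : Prop :=
  forall u, fixed_pt M u -> pt_in [pred x | x \in Crat] u.

Definition inM (n : nat) (M : 'M[int]_2) : Prop :=
  \det M = (n%:Z) ^+ 2 /\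
  gcdz (gcdz (M 0 0) (M 0 1)) (gcdz (M 1 0) (M 1 1)) = 1.

Definition sl2_conj (M N : 'M[int]_2) : Prop :=
  exists g : 'M[int]_2, \det g = 1 /\ N = invmx g *m M *m g.

Definition is_rep (n : nat) (R : 'M[int]_2) : Prop :=
  exists (a d b m s : int),
    [/\ 0 < a, a < d, a * d = (n%:Z) ^+ 2, s = 1 \/ s = -1 &
    let h := gcdz a d in
    [/\ 1 <= b <= h, gcdz b h = 1, 1 <= m <= ((d - a) %/ h)%Z &
        R = s *: mx2 a (b + m * a) 0 d]].

(* Main.v *)
Require Import Defs.
From HB Require Import structures.
From mathcomp Require Import all_boot all_order all_algebra all_field.
From mathcomp Require Import ring lra zify.
Import Order.TTheory GRing.Theory Num.Theory.
Local Open Scope ring_scope.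


Lemma mx2E {R : nzRingType} (a b c d : R) :
  [/\ mx2 a b c d 0 0 = a, mx2 a b c d 0 1 = b, mx2 a b c d 1 0 = c & mx2 a b c d 1 1 = d].
Proof. by rewrite /mx2 !mxE. Qed.

Lemma mx2_eta {R : nzRingType} (A : 'M[R]_2) : A = mx2 (A 0 0) (A 0 1) (A 1 0) (A 1 1).
Proof.
apply/matrixP => i j; rewrite /mx2 mxE.
case: i => [[|[|//]]] Hi; case: j => [[|[|//]]] Hj /=;
 congr (A _ _); exact: val_inj.
Qed.

Lemma mul_mx2 {R : nzRingType} (a b c d a' b' c' d' : R) :
  mx2 a b c d *m mx2 a' b' c' d' = mx2 (a*a' + b*c') (a*b'+b*d') (c*a'+d*c') (c*b'+d*d').
Proof.
apply/matrixP => i j; rewrite !mxE big_ord_recl big_ord1 /mx2 !mxE.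
case: i => [[|[|//]]] Hi; case: j => [[|[|//]]] Hj //=.
Qed.

Lemma det_mx2 {R : comNzRingType} (a b c d : R) : \det (mx2 a b c d) = a * d - b * c.
Proof.
rewrite (expand_det_row _ 0) big_ord_recl big_ord1 /cofactor !det_mx11 /mx2 !mxE /=.
rewrite !expr0 expr1 /=. ring.
Qed.

Lemma tr_mx2 {R : nzRingType} (a b c d : R) : \tr (mx2 a b c d) = a + d.
Proof. by rewrite /mxtrace big_ord_recl big_ord1 /mx2 !mxE. Qed.


Lemma int_unit (p t : int) : p * t = 1 -> p = 1 \/ p = -1.
Proof. move=> h.
case: (ger0P p) => hp; case: (ger0P t) => ht.
all: try nia.
left. have h1: p != 0 by apply/eqP=> p0; move: h; rewrite p0 mul0r.
have h2: t != 0 by apply/eqP=> p0; move: h; rewrite p0 mulr0. nia.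
Qed.

Definition cv2 (x y : algC) : 'cV[algC]_2 := \matrix_(i < 2, j < 1) nth 0 [:: x; y] i.

Lemma cv2E (x y : algC) : cv2 x y 0 0 = x /\ cv2 x y 1 0 = y.
Proof. by rewrite /cv2 !mxE. Qed.

Lemma cv2_eta (v : 'cV[algC]_2) : v = cv2 (v 0 0) (v 1 0).
Proof.
apply/matrixP => i j; rewrite /cv2 mxE (ord1 j).
case: i => [[|[|//]]] Hi /=; congr (v _ _); exact: val_inj.
Qed.

Lemma cv2_inj (x y x' y' : algC) : cv2 x y = cv2 x' y' -> x = x' /\ y = y'.
Proof. move=> h; have [h1 h2] := cv2E x y; have [h3 h4] := cv2E x' y'.
split; [by rewrite -h1 -h3 h | by rewrite -h2 -h4 h]. Qed.

Lemma mul_mx2_cv2 (a b c d x y : algC) :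
  mx2 a b c d *m cv2 x y = cv2 (a * x + b * y) (c * x + d * y).
Proof.
apply/matrixP => i j; rewrite !mxE big_ord_recl big_ord1 /mx2 /cv2 !mxE.
case: i => [[|[|//]]] Hi //=.
Qed.

Lemma scale_cv2 (c x y : algC) : c *: cv2 x y = cv2 (c * x) (c * y).
Proof.
apply/matrixP => i j; rewrite !mxE.
case: i => [[|[|//]]] Hi //=.
Qed.

Lemma add_cv2 (x y x' y' : algC) : cv2 x y + cv2 x' y' = cv2 (x + x') (y + y').
Proof.
apply/matrixP => i j; rewrite !mxE.
case: i => [[|[|//]]] Hi //=.
Qed.

Lemma cv2_eq0 (x y : algC) : (cv2 x y == 0) = (x == 0) && (y == 0).
Proof.
apply/eqP/andP => [h|[/eqP -> /eqP ->]].
  have := cv2E x y; rewrite h !mxE => -[<- <-]; by [].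
by apply/matrixP => i j; rewrite !mxE; case: i => [[|[|//]]] Hi.
Qed.

Lemma Cmx_mx2 (a b c d : int) :
  Cmx (mx2 a b c d) = mx2 a%:~R b%:~R c%:~R d%:~R.
Proof.
apply/matrixP => i j; rewrite /Cmx !mxE.
case: i => [[|[|//]]] Hi; case: j => [[|[|//]]] Hj //=.
Qed.

Lemma scale_mx2 {R : nzRingType} (s a b c d : R) :
  s *: mx2 a b c d = mx2 (s * a) (s * b) (s * c) (s * d).
Proof.
apply/matrixP => i j; rewrite !mxE.
case: i => [[|[|//]]] Hi; case: j => [[|[|//]]] Hj //=.
Qed.


Lemma upper_fixed (al be de lam : algC) (u : 'cV_2) : al != de -> u != 0 ->
  mx2 al be 0 de *m u = lam *: u ->
  proj_eq (cv2 1 0) u \/ proj_eq (cv2 be (de - al)) u.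
Proof.
move=> hne; rewrite (cv2_eta u); set x := u 0 0; set y := u 1 0.
rewrite cv2_eq0 mul_mx2_cv2 scale_cv2 => hnz /cv2_inj [e1 e2].
have hd : de - al != 0 by rewrite subr_eq0 eq_sym.
case: (eqVneq y 0) => hy.
  left; exists x; split; first by move: hnz; rewrite hy eqxx andbT.
  by rewrite scale_cv2 hy mulr1 mulr0.
right; exists (y / (de - al)); split; first by rewrite mulf_neq0 ?invr_eq0.
rewrite scale_cv2; congr cv2; last by rewrite divfK.
have hl : lam = de by apply: (mulIf hy); rewrite -e2 mul0r add0r.
rewrite hl in e1.
have hx : x * (de - al) = y * be.
  apply/eqP; rewrite -subr_eq0; apply/eqP.
  transitivity (- (al * x + be * y - de * x)); first ring.
  by rewrite e1 subrr oppr0.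
by rewrite mulrAC -hx mulfK.
Qed.

Lemma pt_in_cv2 (S : pred algC) (x y : algC) : x \in S -> y \in S -> pt_in S (cv2 x y).
Proof.
move=> hx hy; exists 1; split; first exact: oner_neq0.
by move=> i; rewrite scale1r /cv2 mxE; case: i => [[|[|//]]] Hi.
Qed.

Lemma pt_in_proj (S : pred algC) (x y : algC) u :
  proj_eq (cv2 x y) u -> x \in S -> y \in S -> pt_in S u.
Proof.
move=> [c [hc ->]] hx hy; exists c^-1; split; first by rewrite invr_eq0.
by move=> i; rewrite scalerA mulVf // scale1r /cv2 mxE; case: i => [[|[|//]]] Hi.
Qed.

Lemma part1_geom (s a x d : int) : s * s = 1 -> a != d ->
  hyperbolic (s *: mx2 a x 0 d) /\ cusp_fixed (s *: mx2 a x 0 d).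
Proof.
move=> hs had.
have hs0 : s != 0 by apply/eqP=> s0; move: hs; rewrite s0 mul0r => /eqP; rewrite eq_sym oner_eq0.
rewrite scale_mx2 /hyperbolic /cusp_fixed /fixed_pt Cmx_mx2 mulr0 (_ : (0:int)%:~R = 0 :> algC) //.
set al := (s * a)%:~R; set be := (s * x)%:~R; set de := (s * d)%:~R.
have hne : al != de.
  by rewrite /al /de eqr_int; apply: contra had => /eqP /(mulfI hs0) ->.
have key : forall u : 'cV_2, (u != 0 /\ exists lam, mx2 al be 0 de *m u = lam *: u) ->
   proj_eq (cv2 1 0) u \/ proj_eq (cv2 be (de - al)) u.
  by move=> u [hu [lam hl]]; exact: upper_fixed hne hu hl.
split; last first.
  move=> u /key [] h; apply: (pt_in_proj _ _ _ _ h); rewrite inE.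
  all: rewrite ?rpred0 ?rpred1 //.
    exact: rpred_int.
  by rewrite /al /de -rmorphB rpred_int.
exists (cv2 1 0), (cv2 be (de - al)); split; [|split; [|split; [|split; [|split]]]].
- split; first by rewrite cv2_eq0 oner_eq0.
  by exists al; rewrite mul_mx2_cv2 scale_cv2; congr cv2; ring.
- split; first by rewrite cv2_eq0 subr_eq0 [de == _]eq_sym (negbTE hne) andbF.
  by exists de; rewrite mul_mx2_cv2 scale_cv2; congr cv2; ring.
- move=> [c [_]]; rewrite scale_cv2 => /cv2_inj [_]; rewrite mulr0 => /eqP; by rewrite subr_eq0 [de == _]eq_sym (negbTE hne).
- by apply: pt_in_cv2; rewrite inE ?rpred0 ?rpred1.
- by apply: pt_in_cv2; rewrite inE /be /al /de ?realz // -rmorphB realz.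
- by move=> u hu; apply: key.
Qed.

Lemma cont1 (e00 e01 e10 e11 : int) :
  (forall k, (k %| e00)%Z -> (k %| e01)%Z -> (k %| e10)%Z -> (k %| e11)%Z -> (k %| 1)%Z) ->
  gcdz (gcdz e00 e01) (gcdz e10 e11) = 1.
Proof.
move=> H.
set g := gcdz (gcdz e00 e01) (gcdz e10 e11).
have := H g (dvdz_trans (dvdz_gcdl _ _) (dvdz_gcdl _ _))
  (dvdz_trans (dvdz_gcdl _ _) (dvdz_gcdr _ _))
  (dvdz_trans (dvdz_gcdr _ _) (dvdz_gcdl _ _))
  (dvdz_trans (dvdz_gcdr _ _) (dvdz_gcdr _ _)).
by rewrite dvdz1 /g /gcdz absz_nat => /eqP ->.
Qed.

Lemma cont_dvd (e00 e01 e10 e11 k : int) :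
  gcdz (gcdz e00 e01) (gcdz e10 e11) = 1 ->
  (k %| e00)%Z -> (k %| e01)%Z -> (k %| e10)%Z -> (k %| e11)%Z -> (k %| 1)%Z.
Proof. move=> e h1 h2 h3 h4; apply: (@dvdz_trans (gcdz (gcdz e00 e01) (gcdz e10 e11))); last by rewrite e. by rewrite !dvdz_gcd h1 h2 h3 h4. Qed.

Lemma dvd1_nonneg (k : int) : 0 <= k -> (k %| 1)%Z -> k = 1.
Proof. by case: k => // k _; rewrite dvdz1 absz_nat => /eqP ->. Qed.

Lemma dvd_s (s k x : int) : s * s = 1 -> (k %| s * x)%Z -> (k %| x)%Z.
Proof. by move=> hs h; rewrite -[x]mul1r -hs -mulrA; apply: dvdz_mull. Qed.

Lemma part1 (n : nat) R : is_rep n R -> [/\ inM n R, hyperbolic R & cusp_fixed R].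
Proof.
move=> [a [d [b [m [s [ha hlt had hs [hb hbh hm ->]]]]]]].
have hss : s * s = 1 by case: hs => ->.
have hne : a != d by rewrite lt_eqF.
have [h1 h2] := part1_geom s a (b + m * a) d hss hne.
split => //; split.
  by rewrite scale_mx2 det_mx2 !mulr0 subr0 -had mulrACA hss mul1r.
rewrite scale_mx2 !mxE /=; apply: cont1 => k k1 k2 _ k3.
have ka := dvd_s _ _ _ hss k1; have kd := dvd_s _ _ _ hss k3; have kx := dvd_s _ _ _ hss k2.
apply: (@dvdz_trans (gcdz b (gcdz a d))); last by rewrite hbh.
rewrite dvdz_gcd; apply/andP; split; last by rewrite dvdz_gcd ka kd.
by rewrite -(addrK (m * a) b) rpredB // dvdz_mull.
Qed.


Lemma small_mult (z c h : int) : z = c * h -> 0 < h -> - h < z -> z < h -> z = 0.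
Proof. move=> -> h0 h1 h2. case: (ltrgtP c 0) => hc.
- have : c <= -1 by lia. move=> hc'. have : c * h <= - h. rewrite -mulN1r. by rewrite ler_pM2r. lia.
- have : 1 <= c by lia. move=> hc'. have : h <= c * h. rewrite -{1}(mul1r h). by rewrite ler_pM2r. lia.
- by rewrite hc mul0r.
Qed.

Lemma unit_g (g : 'M[int]_2) : \det g = 1 -> g \in unitmx.
Proof. by move=> h; rewrite unitmxE h unitr1. Qed.

Lemma conj_of (M N g : 'M[int]_2) : \det g = 1 -> M *m g = g *m N ->
  N = invmx g *m M *m g.
Proof. by move=> /unit_g hg e; rewrite -mulmxA e mulKmx. Qed.

Lemma of_conj (M N g : 'M[int]_2) : \det g = 1 -> N = invmx g *m M *m g ->
  M *m g = g *m N.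
Proof. by move=> /unit_g hg ->; rewrite !mulmxA mulmxV // mul1mx. Qed.

Lemma conj_tr (M N g : 'M[int]_2) : \det g = 1 -> M *m g = g *m N -> \tr M = \tr N.
Proof.
move=> /unit_g hg e.
have -> : M = g *m (N *m invmx g) by rewrite mulmxA -e mulmxK.
by rewrite mxtrace_mulC -mulmxA mulVmx // mulmx1.
Qed.

Lemma conj_det (M N g : 'M[int]_2) : \det g = 1 -> M *m g = g *m N -> \det M = \det N.
Proof.
move=> hg e; have := congr1 determinant e; rewrite !det_mulmx hg mulr1 mul1r //.
Qed.

Lemma mx2_inj {R : nzRingType} (a b c d a' b' c' d' : R) :
  mx2 a b c d = mx2 a' b' c' d' -> [/\ a = a', b = b', c = c' & d = d'].
Proof.
move=> e; have [e1 e2 e3 e4] := mx2E a b c d; have [f1 f2 f3 f4] := mx2E a' b' c' d'.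
split; [by rewrite -e1 -f1 e|by rewrite -e2 -f2 e|by rewrite -e3 -f3 e|by rewrite -e4 -f4 e].
Qed.

Lemma hsetup (a d : int) : 0 < a -> a < d -> exists a1 d1 D u v : int,
  [/\ a = a1 * gcdz a d, d = d1 * gcdz a d, d - a = D * gcdz a d,
      ((d - a) %/ gcdz a d)%Z = D & 0 < gcdz a d] /\ (0 < D /\ u * a1 + v * D = 1).
Proof.
move=> ha hd; set h := gcdz a d.
have h0 : 0 < h.
  rewrite lt_def /h gcdz_eq0 negb_and (gt_eqF ha) /= /gcdz //.
have ea := esym (divzK (dvdz_gcdl a d)); have ed := esym (divzK (dvdz_gcdr a d)).
rewrite -/h in ea ed.
set a1 := (a %/ h)%Z in ea; set d1 := (d %/ h)%Z in ed.
have [u [v huv]] := Bezoutz a d.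
exists a1, d1, (d1 - a1), (u + v), v.
have eD : d - a = (d1 - a1) * h by rewrite {1}ed {1}ea; ring.
have hn0 : h != 0 by rewrite gt_eqF.
split; [split => // | split].
- by rewrite eD mulzK.
- by rewrite -(pmulr_lgt0 _ h0) -eD subr_gt0.
- have huv' : u * (a1 * h) + v * (d1 * h) = h by rewrite -ea -ed.
  apply: (mulIf hn0); rewrite mul1r.
  transitivity (u * (a1 * h) + v * (d1 * h)); first ring. exact: huv'.
Qed.

Lemma rep_unique (a d b1 b2 m1 m2 q : int) : 0 < a -> a < d ->
  1 <= b1 <= gcdz a d -> 1 <= b2 <= gcdz a d ->
  1 <= m1 <= ((d - a) %/ gcdz a d)%Z -> 1 <= m2 <= ((d - a) %/ gcdz a d)%Z ->
  b1 + m1 * a - (b2 + m2 * a) = q * (d - a) -> b1 = b2 /\ m1 = m2.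
Proof.
move=> ha hd hb1 hb2 hm1 hm2 e.
have [a1 [d1 [D [u [v [[ea ed eD eDD h0] [D0 huv]]]]]]] := hsetup _ _ ha hd.
rewrite eDD in hm1 hm2; move: hb1 hb2 e; set h := gcdz a d => hb1 hb2 e.
have eb : b1 - b2 = (q * D - (m1 - m2) * a1) * h.
  transitivity (b1 + m1 * a - (b2 + m2 * a) - (m1 - m2) * a); first ring.
  rewrite e eD -/h ea -/h; ring.
have eb0 := small_mult _ _ _ eb h0.
have hb : b1 = b2.
  apply/eqP; rewrite -subr_eq0; apply/eqP; apply: eb0; lia.
split => //.
have hn0 : h != 0 by rewrite gt_eqF.
have e2 : (m1 - m2) * a1 = q * D.
  apply: (mulIf hn0); rewrite -mulrA -ea -mulrA -eD -e hb; ring.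
have em : m1 - m2 = (u * q + v * (m1 - m2)) * D.
  transitivity ((m1 - m2) * (u * a1 + v * D)); first by rewrite huv mulr1.
  transitivity (u * ((m1 - m2) * a1) + v * D * (m1 - m2)); first ring.
  rewrite e2; ring.
have := small_mult _ _ _ em D0; move=> hz.
apply/eqP; rewrite -subr_eq0; apply/eqP; apply: hz; lia.
Qed.

Lemma part3 (n : nat) R1 R2 : is_rep n R1 -> is_rep n R2 -> sl2_conj R1 R2 -> R1 = R2.
Proof.
move=> [a1 [d1 [b1 [m1 [s1 [ha1 hlt1 had1 hs1 [hb1 hbh1 hm1 E1]]]]]]].
move=> [a2 [d2 [b2 [m2 [s2 [ha2 hlt2 had2 hs2 [hb2 hbh2 hm2 E2]]]]]]].
move=> [g [hg e]].
have e' := of_conj _ _ _ hg e.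
have etr := conj_tr _ _ _ hg e'.
rewrite E1 E2 !scale_mx2 !tr_mx2 in etr.
have hss : s1 = s2.
  by move: etr; case: hs1 => ->; case: hs2 => -> //; rewrite ?mul1r ?mulN1r; lia.
subst s2.
have hs0 : s1 != 0 by case: hs1 => ->.
have ss : s1 * s1 = 1 by case: hs1 => ->.
have tr' : a1 + d1 = a2 + d2.
  apply: (mulfI hs0); by rewrite !mulrDr.
rewrite E1 E2 (mx2_eta g) !scale_mx2 !mul_mx2 in e'.
rewrite (mx2_eta g) det_mx2 in hg.
move: e' hg; set p := g 0 0; set q := g 0 1; set r := g 1 0; set t := g 1 1.
move=> /mx2_inj [e00 e01 e10 e11] hg.
have f10 : r * (d1 - a2) = 0.
  apply: (mulfI hs0); rewrite mulr0.
  transitivity ((s1 * 0) * p + (s1 * d1) * r - (r * (s1 * a2) + t * (s1 * 0))); first ring.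
  by rewrite e10 subrr.
move/eqP: f10; rewrite mulf_eq0 subr_eq0 => /orP [/eqP r0 | /eqP hda]; last by lia.
rewrite r0 mulr0 subr0 in hg.
have hp : p = 1 \/ p = -1 := int_unit _ _ hg.
have pp : p * p = 1 by case: hp => ->.
have hp0 : p != 0 by case: hp => ->.
have tp : t = p by rewrite -[t]mul1r -pp -mulrA hg mulr1.
have ha : a1 = a2.
  apply: (mulfI hs0); apply: (mulIf hp0).
  move: e00; rewrite r0 !mulr0 !addr0 => ->; ring.
subst a2.
have hd : d1 = d2 by lia.
subst d2.
set x1 := b1 + m1 * a1 in e01; set x2 := b2 + m2 * a1 in e01.
have f01 : x1 - x2 = (p * q) * (d1 - a1).
  transitivity (p * (p * (x1 - x2))); first by rewrite mulrA pp mul1r.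
  rewrite -mulrA; congr (p * _); apply: (mulfI hs0).
  transitivity ((s1 * a1) * q + (s1 * x1) * t - p * (s1 * x2) - (s1 * a1) * q); first by rewrite tp; ring.
  rewrite e01; ring.
have [hbb hmm] := rep_unique _ _ _ _ _ _ _ ha1 hlt1 hb1 hb2 hm1 hm2 f01.
by rewrite E1 E2 hbb hmm.
Qed.


Lemma ratr_den (q : rat) : ratr q * (denq q)%:~R = (numq q)%:~R :> algC.
Proof. by rewrite -[RHS]ratr_int numqE rmorphM /= ratr_int. Qed.

Lemma prim (x y : algC) : x \in Crat -> y \in Crat -> (x != 0) || (y != 0) ->
  exists (p r e f : int) (k : algC),
    [/\ k != 0, k * x = p%:~R, k * y = r%:~R & e * p + f * r = 1].
Proof.
move=> /CratP [qx ->] /CratP [qy ->] hnz.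
set P0 := numq qx * denq qy; set R0 := numq qy * denq qx.
set k0 : algC := (denq qx * denq qy)%:~R.
have k00 : k0 != 0 by rewrite intr_eq0 mulf_neq0 ?denq_neq0.
have eP : k0 * ratr qx = P0%:~R.
  by rewrite /k0 /P0 !rmorphM /= -ratr_den; ring.
have eR : k0 * ratr qy = R0%:~R.
  by rewrite /k0 /R0 !rmorphM /= -ratr_den; ring.
have hPR : (P0 != 0) || (R0 != 0).
  move: hnz; rewrite -!(intr_eq0 algC) -eP -eR !mulf_eq0 (negbTE k00) //.
set G := gcdz P0 R0.
have G0 : G != 0 by rewrite /G gcdz_eq0 negb_and.
have eP0 := divzK (dvdz_gcdl P0 R0); have eR0 := divzK (dvdz_gcdr P0 R0).
rewrite -/G in eP0 eR0.
have [u [v huv]] := Bezoutz P0 R0.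
exists (P0 %/ G)%Z, (R0 %/ G)%Z, u, v, (k0 / G%:~R).
have GC : G%:~R != 0 :> algC by rewrite intr_eq0.
split.
- by rewrite mulf_neq0 // invr_eq0.
- by rewrite mulrAC eP -{1}eP0 rmorphM /= mulfK.
- by rewrite mulrAC eR -{1}eR0 rmorphM /= mulfK.
- apply: (mulIf G0); rewrite mul1r -[X in _ = X]huv.
  transitivity (u * ((P0 %/ G)%Z * G) + v * ((R0 %/ G)%Z * G)); first ring.
  by rewrite eP0 eR0.
Qed.

Lemma tri (M : 'M[int]_2) (v : 'cV[algC]_2) (al : algC) :
  pt_in [pred x | x \in Crat] v -> v != 0 -> Cmx M *m v = al *: v ->
  exists g L y mu, [/\ \det g = 1, M *m g = g *m mx2 L y 0 mu & al = L%:~R].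
Proof.
move=> [c [hc hin]] hv hev.
have hx : (c *: v) 0 0 \in Crat := hin 0.
have hy : (c *: v) 1 0 \in Crat := hin 1.
have hnz : ((c *: v) 0 0 != 0) || ((c *: v) 1 0 != 0).
  rewrite -negb_and; apply/negP => /andP [h0 h1]; move: hv.
  have : c *: v == 0 by rewrite (cv2_eta (c *: v)) cv2_eq0 h0 h1.
  by rewrite scaler_eq0 (negbTE hc) /= => ->.
have [p [r [e [f [k [hk ep er hb]]]]]] := prim _ _ hx hy hnz.
have hu : (k * c) *: v = cv2 p%:~R r%:~R.
  by rewrite -scalerA (cv2_eta (c *: v)) scale_cv2 ep er.
have hev' : Cmx M *m cv2 p%:~R r%:~R = al *: cv2 p%:~R r%:~R.
  by rewrite -hu -scalemxAr hev !scalerA mulrC.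
move: hev'; rewrite (mx2_eta M) Cmx_mx2 mul_mx2_cv2 scale_cv2 => /cv2_inj [e1 e2].
set m00 := M 0 0 in e1 *; set m01 := M 0 1 in e1 *; set m10 := M 1 0 in e2 *; set m11 := M 1 1 in e2 *.
set L := e * (m00 * p + m01 * r) + f * (m10 * p + m11 * r).
have hL : al = L%:~R.
  rewrite /L rmorphD !rmorphM /= !rmorphD !rmorphM /= e1 e2.
  transitivity (al * (e * p + f * r)%:~R); first by rewrite hb mulr1.
  rewrite rmorphD !rmorphM /=; ring.
have i1 : m00 * p + m01 * r = L * p.
  by apply: (@intr_inj algC); rewrite !rmorphD !rmorphM /= e1 hL.
have i2 : m10 * p + m11 * r = L * r.
  by apply: (@intr_inj algC); rewrite !rmorphD !rmorphM /= e2 hL.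
set Y0 := - m00 * f + m01 * e; set Y1 := - m10 * f + m11 * e.
exists (mx2 p (- f) r e), L, (e * Y0 + f * Y1), (- r * Y0 + p * Y1).
split => //.
  by rewrite det_mx2 -hb; ring.
rewrite !mul_mx2; congr mx2.
- by rewrite i1; ring.
- transitivity (Y0 * (e * p + f * r)); first by rewrite hb mulr1 /Y0; ring.
  ring.
- by rewrite i2; ring.
- transitivity (Y1 * (e * p + f * r)); first by rewrite hb mulr1 /Y1; ring.
  ring.
Qed.


Lemma transport (M R g : 'M[int]_2) (k : int) : \det g = 1 -> M *m g = g *m R ->
  (forall i j, (k %| R i j)%Z) -> forall i j, (k %| M i j)%Z.
Proof.
move=> /unit_g hg e hR.
set R' := \matrix_(i, j) ((R i j) %/ k)%Z.
have eR : R = k *: R'.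
  by apply/matrixP => i j; rewrite !mxE mulrC divzK.
have eM : M = k *: (g *m R' *m invmx g).
  by rewrite scalemxAl scalemxAr -eR -e mulmxK.
by move=> i j; rewrite eM mxE dvdz_mulr.
Qed.

Lemma ord2_cases (i : 'I_2) : i = 0 \/ i = 1.
Proof. case: i => [[|[|//]]] Hi; [left|right]; exact: val_inj. Qed.

Lemma all_entries (R : 'M[int]_2) (k : int) :
  R 0 0 \in dvdz k -> R 0 1 \in dvdz k -> R 1 0 \in dvdz k -> R 1 1 \in dvdz k ->
  forall i j, (k %| R i j)%Z.
Proof.
move=> h1 h2 h3 h4 i j.
by case: (ord2_cases i) => ->; case: (ord2_cases j) => ->.
Qed.

Lemma final_rep (n : nat) (M g : 'M[int]_2) (L y mu s : int) :
  \det g = 1 -> M *m g = g *m mx2 L y 0 mu ->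
  gcdz (gcdz (M 0 0) (M 0 1)) (gcdz (M 1 0) (M 1 1)) = 1 ->
  s * s = 1 -> 0 < s * L -> s * L < s * mu -> L * mu = (n%:Z) ^+ 2 ->
  exists R, is_rep n R /\ sl2_conj M R.
Proof.
move=> hg e hcont ss ha hlt hLm.
set a := s * L in ha hlt; set d := s * mu in hlt; set y' := s * y.
have eN : mx2 L y 0 mu = s *: mx2 a y' 0 d.
  by rewrite scale_mx2 /a /d /y' !mulrA ss !mul1r mulr0.
have [a1 [d1 [D [u [v [[ea ed eD eDD h0] [D0 huv]]]]]]] := hsetup _ _ ha hlt.
set h := gcdz a d in ea ed eD eDD h0.
have hn0 : h != 0 by rewrite gt_eqF.
have Dn0 : D != 0 by rewrite gt_eqF.
set k := ((y' - 1) %/ h)%Z; set b := ((y' - 1) %% h)%Z + 1.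
have ey : y' = k * h + b by rewrite /b addrA -divz_eq subrK.
have hb : 1 <= b <= h.
  have := modz_ge0 (y' - 1) hn0; have := ltz_mod (y' - 1) hn0.
  rewrite gtr0_norm // /b; lia.
set j := ((k * u - 1) %/ D)%Z; set m := ((k * u - 1) %% D)%Z + 1.
have em : m = k * u - j * D.
  have E := divz_eq (k * u - 1) D; rewrite -/j in E.
  apply/eqP; rewrite -subr_eq0; apply/eqP; rewrite /m.
  transitivity (- ((k * u - 1) - (j * D + ((k * u - 1) %% D)%Z))); first ring.
  by rewrite -E subrr oppr0.
have hm : 1 <= m <= D.
  have := modz_ge0 (k * u - 1) Dn0; have := ltz_mod (k * u - 1) Dn0.
  rewrite gtr0_norm // /m; lia.
set x := b + m * a.
set t := k * v + j * a1.
have ey' : y' = x + t * (d - a).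
  rewrite ey /x /t eD em ea.
  transitivity (k * h * (u * a1 + v * D) + b); first by rewrite huv; ring.
  ring.
set R := s *: mx2 a x 0 d.
set T : 'M[int]_2 := mx2 1 t 0 1.
have hT : mx2 L y 0 mu *m T = T *m R.
  rewrite eN /R /T !scale_mx2 !mul_mx2; congr mx2; try ring.
  rewrite ey'; ring.
have e2 : M *m (g *m T) = (g *m T) *m R.
  by rewrite mulmxA e -mulmxA hT mulmxA.
have hg' : \det (g *m T) = 1 by rewrite det_mulmx hg det_mx2; ring.
exists R; split; last by exists (g *m T); split => //; apply: conj_of.
exists a, d, b, m, s; split => //.
- by rewrite /a /d mulrACA ss mul1r.
- by have [->|->] := int_unit _ _ ss; [left|right].
rewrite -/h; split => //; last by rewrite eDD.
apply: dvd1_nonneg => //.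
set k0 := gcdz b h.
have kb : (k0 %| b)%Z := dvdz_gcdl b h.
have ka : (k0 %| a)%Z := dvdz_trans (dvdz_gcdr b h) (dvdz_gcdl a d).
have kd : (k0 %| d)%Z := dvdz_trans (dvdz_gcdr b h) (dvdz_gcdr a d).
have kx : (k0 %| x)%Z by rewrite /x rpredD // dvdz_mull.
have hall := transport _ _ _ _ hg' e2.
have hR : forall i j, (k0 %| R i j)%Z.
  by apply: all_entries; rewrite /R scale_mx2 /mx2 !mxE /= dvdz_mull.
have H := hall k0 hR.
exact: (cont_dvd _ _ _ _ _ hcont).
Qed.


Lemma part2 (n : nat) (hn : (0 < n)%N) M : inM n M -> hyperbolic M -> cusp_fixed M ->
  exists R, is_rep n R /\ sl2_conj M R.
Proof.
move=> [hdet hcont] [v [w [[hv [al hal]] [[hw [be hbe]] [npe [_ [_ hall]]]]]]] hcusp.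
have hab : al != be.
  apply/eqP => eab.
  have hvw : v + w != 0.
    apply/eqP => e0; apply: npe; exists (-1); split; first by rewrite oppr_eq0 oner_eq0.
    by rewrite scaleN1r; apply/eqP; rewrite -addr_eq0 addrC e0.
  have fu : fixed_pt M (v + w).
    by split => //; exists al; rewrite mulmxDr hal hbe -eab scalerDr.
  case: (hall _ fu) => [[c [hc ec]] | [c [hc ec]]]; apply: npe.
  - have ew : w = (c - 1) *: v by rewrite scalerBl scale1r -ec addrC addKr.
    exists (c - 1); split => //; apply/eqP => c1; move: hw; by rewrite ew c1 scale0r eqxx.
  - have ev : v = (c - 1) *: w by rewrite scalerBl scale1r -ec addrK.
    have c1 : c - 1 != 0 by apply/eqP => c1; move: hv; rewrite ev c1 scale0r eqxx.
    exists (c - 1)^-1; split; first by rewrite invr_eq0.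
    by rewrite ev scalerA mulVf // scale1r.
have [gv [Lv [yv [muv [hgv ev hLv]]]]] := tri _ _ _ (hcusp _ (conj hv (ex_intro _ al hal))) hv hal.
have [gw [Lw [yw [muw [hgw ew hLw]]]]] := tri _ _ _ (hcusp _ (conj hw (ex_intro _ be hbe))) hw hbe.
have hLL : Lv != Lw by move: hab; rewrite hLv hLw eqr_int.
have tv := conj_tr _ _ _ hgv ev; have tw := conj_tr _ _ _ hgw ew.
rewrite tr_mx2 in tv; rewrite tr_mx2 in tw.
have dv := conj_det _ _ _ hgv ev; have dw := conj_det _ _ _ hgw ew.
rewrite det_mx2 mulr0 subr0 in dv; rewrite det_mx2 mulr0 subr0 in dw.
have hmuw : muw = Lv + muv - Lw.
  have h : Lw + muw = Lv + muv by rewrite -tv -tw.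
  by rewrite -h; ring.
have hprod : (Lv - Lw) * (muv - Lw) = 0.
  transitivity (Lv * muv - Lw * muw); first by rewrite hmuw; ring.
  by rewrite -dv -dw subrr.
move/eqP: hprod; rewrite mulf_eq0 subr_eq0 (negbTE hLL) /= subr_eq0 => /eqP hmv.
have hmw : muw = Lv by rewrite hmuw hmv; ring.
have hn2 : 0 < (n%:Z) ^+ 2 by rewrite exprn_gt0 // ltz_nat.
have hLv2 : Lv * muv = (n%:Z) ^+ 2 by rewrite -dv hdet.
have hLw2 : Lw * muw = (n%:Z) ^+ 2 by rewrite hmw -hmv mulrC.
have hne : Lv != muv by rewrite hmv.
case: (ltrgtP Lv 0) => hs.
- have hmu : muv < 0 by nia.
  have ss : (-1) * (-1) = 1 :> int by [].
  case: (ltrgtP muv Lv) => hc.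
  + apply: (final_rep n M gv Lv yv muv _ hgv ev hcont ss); rewrite ?mulN1r //; lia.
  + apply: (final_rep n M gw Lw yw muw _ hgw ew hcont ss); rewrite ?mulN1r //; lia.
  + by move: hne; rewrite hc eqxx.
- have hmu : 0 < muv by nia.
  have ss : 1 * 1 = 1 :> int by [].
  case: (ltrgtP muv Lv) => hc.
  + apply: (final_rep n M gw Lw yw muw _ hgw ew hcont ss); rewrite ?mul1r //; lia.
  + apply: (final_rep n M gv Lv yv muv _ hgv ev hcont ss); rewrite ?mul1r //; lia.
  + by move: hne; rewrite hc eqxx.
- by move: hLv2 hn2; rewrite hs mul0r => <-; rewrite ltxx.
Qed.


Theorem lemma9 (n : nat) (hn : (0 < n)%N) :
  (forall R, is_rep n R -> [/\ inM n R, hyperbolic R & cusp_fixed R]) /\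
  (forall M, inM n M -> hyperbolic M -> cusp_fixed M ->
     exists R, is_rep n R /\ sl2_conj M R) /\
  (forall R1 R2, is_rep n R1 -> is_rep n R2 -> sl2_conj R1 R2 -> R1 = R2).
Proof.
split; first exact: part1.
split; first exact: part2.
exact: part3.
Qed.
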